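(* For all $n\in\mathbb{N}$ with $n\geq 2$, $$\iota(2^n-1)\leq \frac{3}{2}n-\left\lfloor \frac{n-2}{2^{\lfloor \frac{\log n}{\log 2}-1\rfloor+1}}\right\rfloor-\left\lfloor \frac{\log n}{\log 2}-1\right\rfloor+\frac{1}{4}\left(1-(-1)^n\right)+\iota(n).$$
   Context: An addition chain producing $N$ is a sequence $1,2,s_3,\ldots,s_k=N$ in which every term after the first is the sum of two (not necessarily distinct) earlier terms; its length is the number of terms excluding the initial $1$. $\iota(N)$ denotes the length of the shortest addition chain producing $N$. $\lfloor\cdot\rfloor$ is the floor function and $\log$ the natural logarithm. *)

(* Defs.v *)
From Stdlib Require Import Reals ClassicalEpsilon.
From mathcomp Require Import all_boot zify.
Set Implicit Arguments.
Unset Strict Implicit.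
Unset Printing Implicit Defensive.

Fixpoint chain_ok (pre s : seq nat) : bool :=
  match s with
  | [::] => true
  | a :: t => has (fun x => has (fun y => x + y == a) pre) pre
              && chain_ok (rcons pre a) t
  end.

(* An addition chain producing N: the sequence 1, s_1, ..., s_k with s_k = N
   (s_k = 1 when k = 0).  We store only the terms after the initial 1;
   the length of the chain is [size s]. *)
Definition addition_chain_for (N : nat) (s : seq nat) : bool :=
  chain_ok [:: 1] s && (last 1 s == N).

Definition has_chain_of_length (N k : nat) : Prop :=
  exists s, addition_chain_for N s /\ size s = k.

Definition has_chain_of_lengthb (N k : nat) : bool :=
  if excluded_middle_informative (has_chain_of_length N k) then true else false.

Lemma chain_ok_iota k m : 0 < k -> chain_ok (iota 1 k) (iota k.+1 m).
Proof.
elim: m k => [|m IH] k hk //=.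
apply/andP; split.
  apply/hasP; exists k; first by rewrite mem_iota hk /= add1n ltnSn.
  apply/hasP; exists 1; first by rewrite mem_iota /= add1n ltnS.
  by rewrite addn1.
have -> : rcons (iota 1 k) k.+1 = iota 1 k.+1 by rewrite -cats1 -(addn1 k) iotaD add1n addn1.
exact: IH.
Qed.

Lemma has_chain_exists N : 0 < N -> exists k, has_chain_of_lengthb N k.
Proof.
move=> hN; exists N.-1; rewrite /has_chain_of_lengthb.
case: excluded_middle_informative => // []; case.
exists (iota 2 N.-1); split; last by rewrite size_iota.
rewrite /addition_chain_for (chain_ok_iota N.-1 (k:=1)) //=.
case: N hN => [|[|N]] //= _.
have H : forall m, last m (iota m.+1 N) = m + N.
  elim: N => [|N IH] m /=; first by rewrite addn0.
  rewrite IH; lia.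
by rewrite H.
Qed.

(* iota(N): the length of a shortest addition chain producing N (N >= 1);
   set to 0 for N = 0, where no chain exists. *)
Definition iota_ac (N : nat) : nat :=
  match (0 < N) as b return (0 < N) = b -> nat with
  | true => fun h => ex_minn (has_chain_exists h)
  | false => fun _ => 0
  end (erefl _).

(* Main.v *)
Require Import Defs.
From mathcomp Require Import all_boot zify.
From Stdlib Require Import Reals Lra Lia ClassicalEpsilon.

Lemma iota_ac_le N s : 0 < N -> addition_chain_for N s -> iota_ac N <= size s.
Proof.
move=> hN hs; rewrite /iota_ac.
move: (erefl (0 < N)); case: {2 3}(0 < N) => e; last by rewrite hN in e.
case: ex_minnP => m _ /(_ (size s)); apply.
rewrite /has_chain_of_lengthb; case: excluded_middle_informative => // [[]].
by exists s.
Qed.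

Lemma iota_ac_chain N : 0 < N -> exists s, addition_chain_for N s /\ size s = iota_ac N.
Proof.
move=> hN; rewrite /iota_ac.
move: (erefl (0 < N)); case: {2 3}(0 < N) => e; last by rewrite hN in e.
case: ex_minnP => m + _.
by rewrite /has_chain_of_lengthb; case: excluded_middle_informative.
Qed.

Lemma chain_bound s : forall pre B d, all (fun x => x <= B) pre -> d <= B ->
  chain_ok pre s -> last d s <= expn 2 (size s) * B.
Proof.
elim: s => [|a t IH] pre B d hp hd /=; first by rewrite mul1n.
case/andP => /hasP [x hx /hasP [y hy /eqP <-]] hc.
have hxB : x <= B by move/allP: hp => /(_ x hx).
have hyB : y <= B by move/allP: hp => /(_ y hy).
have := IH (rcons pre (x + y)) (2 * B) (x + y).
move=> h.
have : last (x + y) t <= expn 2 (size t) * (2 * B).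
  apply: h => //; last lia.
  rewrite all_rcons; apply/andP; split; first lia.
  apply/allP => z /(allP hp) /=; lia.
by rewrite expnS -mulnA mulnCA.
Qed.

Lemma iota_ac_lower N : 0 < N -> N <= expn 2 (iota_ac N).
Proof.
move=> hN; have [s [/andP [hc /eqP hl] <-]] := iota_ac_chain N hN.
have := chain_bound s [::1] 1 1 erefl erefl hc.
by rewrite muln1 hl.
Qed.

Lemma chain_ok_cat pre s1 s2 :
  chain_ok pre (s1 ++ s2) = chain_ok pre s1 && chain_ok (pre ++ s1) s2.
Proof.
elim: s1 pre => [|a t IH] pre /=; first by rewrite cats0.
by rewrite IH -cats1 -catA andbA.
Qed.

Definition G : nat -> seq nat := fix G j :=
  match j with
  | 0 => [:: 2; 3]
  | j'.+1 => let x := last 1 (G j') in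
      G j' ++ [:: x + x; (x + x) + (x + x); (x + x) + (x + x) + 3]
  end.

Lemma step3 pre x : x \in pre -> 3 \in pre ->
  chain_ok pre [:: x + x; (x + x) + (x + x); (x + x) + (x + x) + 3].
Proof.
move=> hx h3 /=; rewrite -!cats1.
apply/and4P; split => //.
+ apply/hasP; exists x => //; apply/hasP; exists x => //.
+ apply/hasP; exists (x + x); first by rewrite !mem_cat !mem_seq1 eqxx !orbT.
  apply/hasP; exists (x + x) => //; by rewrite !mem_cat !mem_seq1 eqxx !orbT.
+ apply/hasP; exists ((x + x) + (x + x)); first by rewrite !mem_cat !mem_seq1 eqxx !orbT.
  apply/hasP; exists 3 => //; by rewrite !mem_cat h3.
Qed.

Lemma step2 pre x : x \in pre -> 1 \in pre ->
  chain_ok pre [:: x + x; x + x + 1].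
Proof.
move=> hx h1 /=; rewrite -!cats1.
apply/and3P; split => //.
+ apply/hasP; exists x => //; apply/hasP; exists x => //.
+ apply/hasP; exists (x + x); first by rewrite !mem_cat !mem_seq1 eqxx !orbT.
  apply/hasP; exists 1 => //; by rewrite !mem_cat h1.
Qed.

Lemma G_prop j : [/\ chain_ok [:: 1] (G j), last 1 (G j) = expn 4 j.+1 - 1,
   size (G j) = 3 * j + 2 & 3 \in G j].
Proof.
elim: j => [|j [hc hl hs h3]]; first by [].
rewrite [G j.+1]/= chain_ok_cat hc size_cat hs mem_cat h3 last_cat; split => //.
- rewrite step3 // ?hl ?mem_cat ?h3 ?orbT //.
  by rewrite -mem_cat -hl; apply: mem_last.
- rewrite hl /=.
  have : 0 < expn 4 j.+1 by rewrite expn_gt0.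
  rewrite (expnS 4 j.+1); lia.
- rewrite /=; lia.
Qed.

Lemma H_prop j : exists s, [/\ chain_ok [:: 1] s, last 1 s = 2 * expn 4 j.+1 - 1 &
   size s = 3 * j + 4].
Proof.
have [hc hl hs h3] := G_prop j.
exists (G j ++ [:: last 1 (G j) + last 1 (G j); last 1 (G j) + last 1 (G j) + 1]).
rewrite chain_ok_cat hc size_cat hs last_cat; split => //.
- by rewrite step2 //; apply: mem_last.
- rewrite hl /=.
  have : 0 < expn 4 j.+1 by rewrite expn_gt0.
  lia.
- rewrite /=; lia.
Qed.
Local Open Scope R_scope.
Lemma real_part (n m : nat) : 2 <= INR n -> INR n <= 2 ^ m ->
  IZR (Int_part ((INR n - 2) / powerRZ 2 (Int_part (ln (INR n) / ln 2 - 1) + 1)%Z)) <= 1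
  /\ IZR (Int_part (ln (INR n) / ln 2 - 1)) <= INR m - 1.
Proof.
intros h2 hm.
assert (l2 : 0 < ln 2) by (generalize ln_lt_2; lra).
assert (hL : ln (INR n) <= INR m * ln 2).
{ destruct (Rle_lt_or_eq_dec _ _ hm) as [h|h].
  - rewrite -ln_pow; last lra. apply Rlt_le, ln_increasing; lra.
  - rewrite h ln_pow; lra. }
set (L := ln (INR n) / ln 2).
assert (eL : ln (INR n) = L * ln 2) by (unfold L; field; lra).
assert (hLm : L <= INR m).
{ apply Rmult_le_reg_r with (ln 2); lra. }
set (K := Int_part (L - 1)).
destruct (base_Int_part (L - 1)) as [k1 k2]. fold K in k1, k2.
split; [| lra].
rewrite powerRZ_Rpower; last lra. unfold Rpower. rewrite plus_IZR.
set (P := exp ((IZR K + 1) * ln 2)).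
assert (hP0 : 0 < P) by apply exp_pos.
assert (hP : INR n < 2 * P).
{ assert (hlt : (L - 1) * ln 2 < (IZR K + 1) * ln 2) by (apply Rmult_lt_compat_r; lra).
  assert (e2 : 2 * P = exp ((IZR K + 1) * ln 2 + ln 2)).
  { rewrite exp_plus exp_ln; last lra. unfold P; lra. }
  rewrite e2 -{1}(exp_ln (INR n)); last lra.
  apply exp_increasing. lra. }
set (q := (INR n - 2) / P).
assert (eq : q * P = INR n - 2) by (unfold q; field; lra).
assert (hq : q < 2) by nra.
destruct (base_Int_part q) as [f1 f2].
assert (hF : (Int_part q < 2)%Z) by (apply lt_IZR; lra).
apply IZR_le. lia.
Qed.

Lemma INR_expn2 m : INR (expn 2 m) = 2 ^ m.
Proof.
induction m as [|m IH]; first reflexivity.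
rewrite expnS. change (muln 2 (expn 2 m)) with (Nat.mul 2 (expn 2 m)).
rewrite mult_INR IH; simpl; ring.
Qed.

Theorem mainTheorem13 (n : nat) (hn : leq 2 n) :
  INR (iota_ac (subn (expn 2 n) 1))
  <= 3 / 2 * INR n
     - IZR (Int_part (INR (subn n 2) /
              powerRZ 2 (Int_part (ln (INR n) / ln 2 - 1) + 1)%Z))
     - IZR (Int_part (ln (INR n) / ln 2 - 1))
     + 1 / 4 * (1 - (-1) ^ n)
     + INR (iota_ac n).
Proof.
have hn0 : (0 < n)%nat by apply: leq_trans hn.
have hm := iota_ac_lower n hn0.
have hmR : INR n <= 2 ^ iota_ac n.
  rewrite -INR_expn2; apply: le_INR; exact/leP.
have h2R : 2 <= INR n.
  by apply: (le_INR 2 n); apply/leP.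
have [hF hK] := real_part n (iota_ac n) h2R hmR.
have -> : INR (subn n 2) = INR n - 2.
  change (subn n 2) with (Nat.sub n 2); rewrite minus_INR; last by apply/leP.
  by [].
have hN : (0 < subn (expn 2 n) 1)%nat.
  by rewrite subn_gt0 -{1}(expn0 2) ltn_exp2l.
have [j [hj|hj]] : exists j, n = (2 * j + 2)%nat \/ n = (2 * j + 3)%nat.
  exists (n %/ 2 - 1)%nat; have := divn_eq n 2; have := ltn_pmod n (isT : (0 < 2)%nat).
  lia.
- have [hc hl hs _] := G_prop j.
  have hle : (iota_ac (subn (expn 2 n) 1) <= 3 * j + 2)%nat.
    rewrite -hs; apply: iota_ac_le => //.
    rewrite /addition_chain_for hc hl /= hj.
    by rewrite (_ : (2 * j + 2 = 2 * j.+1)%nat) ?expnM //; lia.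
  have e : (-1) ^ n = 1.
    by rewrite (_ : n = (2 * j.+1)%coq_nat) ?pow_1_even //; lia.
  have hnR : INR n = 2 * INR j + 2.
    rewrite (_ : n = (2 * j + 2)%coq_nat); last by lia.
    rewrite plus_INR mult_INR /=; ring.
  have hcR : INR (iota_ac (subn (expn 2 n) 1)) <= 3 * INR j + 2.
    have := le_INR _ _ (elimT leP hle).
    rewrite (_ : (3 * j + 2)%nat = (3 * j + 2)%coq_nat); last by lia.
    rewrite plus_INR mult_INR /=; lra.
  rewrite e; lra.
- have [s [hc hl hs]] := H_prop j.
  have hle : (iota_ac (subn (expn 2 n) 1) <= 3 * j + 4)%nat.
    rewrite -hs; apply: iota_ac_le => //.
    have -> : expn 2 n = (2 * expn 4 j.+1)%nat.
      rewrite hj (_ : (2 * j + 3 = (2 * j.+1).+1)%nat); last by lia.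
      by rewrite expnS expnM.
    by rewrite /addition_chain_for hc hl eqxx.
  have e : (-1) ^ n = -1.
    by rewrite (_ : n = S (2 * j.+1)%coq_nat) ?pow_1_odd //; lia.
  have hnR : INR n = 2 * INR j + 3.
    rewrite (_ : n = (2 * j + 3)%coq_nat); last by lia.
    rewrite plus_INR mult_INR /=; ring.
  have hcR : INR (iota_ac (subn (expn 2 n) 1)) <= 3 * INR j + 4.
    have := le_INR _ _ (elimT leP hle).
    rewrite (_ : (3 * j + 4)%nat = (3 * j + 4)%coq_nat); last by lia.
    rewrite plus_INR mult_INR /=; lra.
  rewrite e; lra.
Qed.
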